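(* Let $\alpha>2$, let $i\in\{1,2\}$ and let $j$ be the other index. Fix $\Lambda_j>0$. Then the function \[ \Lambda_i\mapsto U_i(\Lambda_1,\Lambda_2)=\Lambda_i\int_0^\infty e^{-(\Lambda_1+\Lambda_2)x^{2/\alpha}}\frac{dx}{1+x},\qquad \Lambda_i>0, \] is smooth and continuous and has a unique maximum point $\Lambda_i^*$. *)

(* Defs.v *)
From Stdlib Require Import Reals.
From Coquelicot Require Import Coquelicot.
Open Scope R_scope.

Definition Iint (alpha s : R) : R :=
  RInt_gen (fun x => exp (- s * Rpower x (2 / alpha)) / (1 + x))
           (at_point 0) (Rbar_locally p_infty).

Definition U (alpha : R) (i : nat) (L1 L2 : R) : R :=
  (if Nat.eqb i 1 then L1 else L2) * Iint alpha (L1 + L2).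

Definition Ui_section (alpha : R) (i : nat) (Lj : R) (L : R) : R :=
  if Nat.eqb i 1 then U alpha 1 L Lj else U alpha 2 Lj L.

(* Main.v *)
Require Import Defs.
From Stdlib Require Import Reals Lra Lia.
From Coquelicot Require Import Coquelicot.
Open Scope R_scope.


Definition pc (b x : R) : R := if Rlt_dec 0 x then Rpower x b else 0.

Lemma pc_pos b x : 0 < x -> pc b x = Rpower x b.
Proof. intro H. unfold pc. destruct (Rlt_dec 0 x); [auto|lra]. Qed.
Lemma pc_neg b x : x <= 0 -> pc b x = 0.
Proof. intro H. unfold pc. destruct (Rlt_dec 0 x); [lra|auto]. Qed.
Lemma pc_ge0 b x : 0 <= pc b x.
Proof. unfold pc. destruct (Rlt_dec 0 x). unfold Rpower; left; apply exp_pos. lra. Qed.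

Lemma Rpower_1_base y : Rpower 1 y = 1.
Proof. unfold Rpower. rewrite ln_1, Rmult_0_r. apply exp_0. Qed.

Lemma deriv_cont (f : R -> R) x l : is_derive f x l -> continuous f x.
Proof. intro H. apply (ex_derive_continuous (K:=R_AbsRing) (V:=R_NormedModule)). exists l. exact H. Qed.

Lemma pc_cont b x : 0 < b -> continuous (pc b) x.
Proof.
  intro Hb.
  destruct (Rlt_le_dec 0 x) as [Hx|Hx].
  - apply deriv_cont with (b * Rpower x (b-1)).
    apply is_derive_ext_loc with (fun y => Rpower y b).
    + exists (mkposreal x Hx). intros y Hy. change (Rabs (y - x) < x) in Hy. rewrite pc_pos; auto.
      apply Rabs_lt_between in Hy. lra.
    + apply is_derive_Reals. apply derivable_pt_lim_power; auto.
  - destruct Hx as [Hx|Hx].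
    + apply deriv_cont with 0.
      apply is_derive_ext_loc with (fun _ => 0).
      * assert (Hx' : 0 < -x) by lra. exists (mkposreal _ Hx'). intros y Hy.
        change (Rabs (y - x) < -x) in Hy.
        rewrite pc_neg; auto. apply Rabs_lt_between in Hy. lra.
      * apply is_derive_Reals, derivable_pt_lim_const.
    + subst x. apply filterlim_locally. intro eps.
      assert (Hd : 0 < Rpower eps (/ b)) by (unfold Rpower; apply exp_pos).
      exists (mkposreal _ Hd). intros y Hy.
      change (Rabs (pc b y - pc b 0) < eps). rewrite (pc_neg b 0) by lra.
      change (Rabs (y - 0) < Rpower eps (/ b)) in Hy.
      destruct (Rlt_le_dec 0 y) as [Hy0|Hy0].
      * rewrite pc_pos by auto. rewrite Rminus_0_r, Rabs_pos_eq.
        2:{ unfold Rpower; left; apply exp_pos. }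
        replace (pos eps) with (Rpower (Rpower eps (/b)) b).
        { apply Rlt_Rpower_l; auto. rewrite Rminus_0_r, Rabs_pos_eq in Hy; lra. }
        rewrite Rpower_mult. rewrite Rinv_l by lra. apply Rpower_1. apply cond_pos.
      * rewrite pc_neg by auto. rewrite Rminus_0_r, Rabs_R0. apply cond_pos.
Qed.


Lemma exp_bound2 w : 0 <= exp w - 1 - w <= w ^ 2 * exp (Rabs w).
Proof.
  assert (H1 := exp_ineq1_le w). assert (H2 := exp_ineq1_le (-w)).
  assert (He : exp (-w) * exp w = 1) by (rewrite <- exp_plus; replace (-w+w) with 0 by ring; apply exp_0).
  assert (Hp := exp_pos w). assert (Hq := exp_pos (-w)).
  assert (H3 : exp w * (1 - w) <= 1) by nra.
  split. lra.
  destruct (Rle_lt_dec 0 w) as [Hw|Hw].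
  - rewrite Rabs_pos_eq by auto. nra.
  - rewrite Rabs_left by auto.
    assert (Hx : 1 <= exp (-w)) by (rewrite <- exp_0; apply exp_le_3 || (left; apply exp_increasing; lra)).
    nra.
Qed.

Lemma Rpower_exp z a : Rpower (exp z) a = exp (a * z).
Proof. unfold Rpower. rewrite ln_exp. auto. Qed.

Lemma powA a s : 0 <= a -> 0 < s -> exists K, forall y, 0 < y -> Rpower y a * exp (- s * y) <= K.
Proof.
  intros Ha Hs. destruct Ha as [Ha|Ha].
  - exists (exp (-a) / Rpower (s / a) a). intros y Hy.
    assert (H1 := exp_ineq1_le (s * y / a - 1)).
    assert (Hsa : 0 < s / a) by (apply Rdiv_lt_0_compat; auto).
    assert (H2 : Rpower (y * (s / a)) a <= Rpower (exp (s * y / a - 1)) a).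
    { apply Rle_Rpower_l. lra. split. apply Rmult_lt_0_compat; auto.
      replace (y * (s/a)) with (s*y/a) by (field; lra). lra. }
    rewrite Rpower_exp, <- Rpower_mult_distr in H2 by auto.
    assert (Hp : 0 < Rpower (s/a) a) by (unfold Rpower; apply exp_pos).
    replace (a * (s * y / a - 1)) with (s*y + -a) in H2 by (field; lra).
    rewrite exp_plus in H2.
    apply Rmult_le_reg_r with (Rpower (s/a) a). auto.
    replace (exp (-a) / Rpower (s / a) a * Rpower (s / a) a) with (exp (-a)) by (field; lra).
    replace (Rpower y a * exp (- s * y) * Rpower (s / a) a) with
      ((Rpower y a * Rpower (s / a) a) * exp (- s * y)) by ring.
    replace (exp (-a)) with ((exp (s*y) * exp (-a)) * exp (- s * y)).
    2:{ rewrite Rmult_comm, <- Rmult_assoc, <- exp_plus. replace (- s * y + s * y) with 0 by ring.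
        rewrite exp_0; ring. }
    apply Rmult_le_compat_r. left; apply exp_pos. auto.
  - subst a. exists 1. intros y Hy. unfold Rpower. rewrite Rmult_0_l, exp_0, Rmult_1_l.
    rewrite <- exp_0. left. apply exp_increasing. nra.
Qed.

Lemma dom3 b n s : 0 < b -> 0 < s -> exists C, forall x, 0 <= x ->
   (1 + x) ^ 3 * (pc b x ^ n * exp (- s * pc b x)) <= C.
Proof.
  intros Hb Hs.
  destruct (powA (INR n) s (pos_INR n) Hs) as [K1 HK1].
  assert (Ha : 0 <= 3 / b + INR n) by (assert (0 < 3/b) by (apply Rdiv_lt_0_compat; lra); assert (HH := pos_INR n); lra).
  destruct (powA _ s Ha Hs) as [K2 HK2].
  exists (4 * (K1 + K2) + 1). intros x Hx.
  destruct Hx as [Hx|Hx].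
  - rewrite pc_pos by auto. set (y := Rpower x b).
    assert (Hy : 0 < y) by (unfold y, Rpower; apply exp_pos).
    assert (Hxy : x = Rpower y (/ b)) by (unfold y; rewrite Rpower_mult, Rinv_r by lra; rewrite Rpower_1; auto).
    assert (Hc0 : 0 <= (x-1)^2*(x+1)) by (apply Rmult_le_pos; [apply pow2_ge_0|lra]).
    assert (Hc : (1 + x) ^ 3 <= 4 * (1 + x ^ 3)) by nra.
    assert (Hx3 : x ^ 3 = Rpower y (3 / b)).
    { rewrite Hxy, <- Rpower_pow by (unfold Rpower; apply exp_pos). rewrite Rpower_mult. f_equal. simpl; field; lra. }
    assert (Hyn : y ^ n = Rpower y (INR n)) by (rewrite Rpower_pow; auto).
    assert (E1 := HK1 y Hy). assert (E2 := HK2 y Hy).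
    rewrite Rpower_plus in E2.
    assert (He : 0 < exp (- s * y)) by apply exp_pos.
    assert (0 <= y ^ n) by (apply pow_le; lra).
    assert (0 <= Rpower y (3/b)) by (unfold Rpower; left; apply exp_pos).
    assert (0 <= K1) by (eapply Rle_trans; [|apply E1]; apply Rmult_le_pos; [unfold Rpower; left; apply exp_pos|lra]).
    assert (0 <= K2) by (eapply Rle_trans; [|apply E2]; apply Rmult_le_pos; [apply Rmult_le_pos; unfold Rpower; left; apply exp_pos|lra]).
    rewrite <- Hyn in E1, E2. rewrite <- Hx3 in E2.
    apply Rle_trans with (4 * (1 + x^3) * (y ^ n * exp (- s * y))).
    apply Rmult_le_compat_r. apply Rmult_le_pos; lra. auto.
    nra.
  - subst x. rewrite pc_neg by lra. rewrite Rplus_0_r, pow1, Rmult_0_r, exp_0, Rmult_1_r, Rmult_1_l.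
    assert (0 <= K1) by (eapply Rle_trans; [|apply (HK1 1)]; [apply Rmult_le_pos; [unfold Rpower; left; apply exp_pos|left; apply exp_pos] | lra]).
    assert (0 <= K2) by (eapply Rle_trans; [|apply (HK2 1)]; [apply Rmult_le_pos; [unfold Rpower; left; apply exp_pos|left; apply exp_pos] | lra]).
    destruct n. simpl; lra. rewrite pow_i by lia. lra.
Qed.


Ltac nz := repeat (apply Rmult_integral_contrapositive_currified); try (apply Rgt_not_eq; lra).

Lemma RChasles (f : R -> R) a b c : ex_RInt f a b -> ex_RInt f b c -> RInt f a b + RInt f b c = RInt f a c.
Proof. intros. apply (RInt_Chasles f a b c); auto. Qed.

Definition II (f : R -> R) (l : R) :=
  (forall b, 0 <= b -> ex_RInt f 0 b) /\ is_lim (fun b => RInt f 0 b) p_infty l.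

Lemma nat_unbounded r : exists N : nat, r < INR N.
Proof.
  destruct (Rle_lt_dec r 0) as [H|H].
  - exists 1%nat. simpl. lra.
  - destruct (nfloor_ex r) as [n Hn]. lra. exists (S n). rewrite S_INR. lra.
Qed.

Lemma II_unique f l l' : II f l -> II f l' -> l = l'.
Proof.
  intros [_ H1] [_ H2]. apply is_lim_unique in H1. apply is_lim_unique in H2.
  rewrite H1 in H2. injection H2. auto.
Qed.

Lemma II_ext f g l : (forall x, 0 <= x -> f x = g x) -> II f l -> II g l.
Proof.
  intros He [H1 H2]. split.
  - intros b Hb. apply ex_RInt_ext with f; auto. intros x Hx.
    rewrite Rmin_left, Rmax_right in Hx by lra. apply He; lra.
  - apply is_lim_ext_loc with (fun b => RInt f 0 b); auto.
    exists 0. intros y Hy. apply RInt_ext. intros x Hx.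
    rewrite Rmin_left, Rmax_right in Hx by lra. apply He; lra.
Qed.

Lemma II_plus f g l m : II f l -> II g m -> II (fun x => f x + g x) (l + m).
Proof.
  intros [H1 H2] [H3 H4]. split.
  - intros b Hb. apply (ex_RInt_plus f g); auto.
  - apply is_lim_ext_loc with (fun b => RInt f 0 b + RInt g 0 b).
    + exists 0. intros y Hy. symmetry. apply (RInt_plus f g); auto with real.
    + apply is_lim_plus'; auto.
Qed.

Lemma II_scal f l c : II f l -> II (fun x => c * f x) (c * l).
Proof.
  intros [H1 H2]. split.
  - intros b Hb. apply (ex_RInt_scal f); auto.
  - apply is_lim_ext_loc with (fun b => c * RInt f 0 b).
    + exists 0. intros y Hy. symmetry. apply (RInt_scal f); auto with real.
    + apply (is_lim_scal_l _ c _ l). auto.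
Qed.

Lemma II_minus f g l m : II f l -> II g m -> II (fun x => f x - g x) (l - m).
Proof.
  intros H1 H2. apply II_ext with (fun x => f x + (-1) * g x).
  intros; ring. replace (l - m) with (l + (-1) * m) by ring.
  apply II_plus; auto. apply II_scal; auto.
Qed.

Lemma II_lb f l C : II f l -> (exists B, forall b, B < b -> C <= RInt f 0 b) -> C <= l.
Proof.
  intros [H1 H2] [B HB].
  assert (H := is_lim_le_loc (fun _ => C) (fun b => RInt f 0 b) p_infty C l).
  simpl in H. apply H; auto. exists B; auto. apply is_lim_const.
Qed.

Lemma II_ub f l C : II f l -> (exists B, forall b, B < b -> RInt f 0 b <= C) -> l <= C.
Proof.
  intros [H1 H2] [B HB].
  assert (H := is_lim_le_loc (fun b => RInt f 0 b) (fun _ => C) p_infty l C).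
  simpl in H. apply H; auto. exists B; auto. apply is_lim_const.
Qed.

Lemma II_le f g l m : (forall x, 0 <= x -> f x <= g x) -> II f l -> II g m -> l <= m.
Proof.
  intros He Hf Hg. assert (Hd := II_minus g f m l Hg Hf).
  cut (0 <= m - l). lra.
  apply II_lb with (1 := Hd). exists 0. intros b Hb.
  destruct Hd as [Hd _]. apply RInt_ge_0. lra. apply Hd; lra.
  intros x Hx. specialize (He x). lra.
Qed.

Lemma II_abs f g l m : (forall x, 0 <= x -> Rabs (f x) <= g x) -> II f l -> II g m -> Rabs l <= m.
Proof.
  intros He Hf Hg. apply Rabs_le. split.
  - assert (H := II_scal g m (-1) Hg).
    assert (H' := II_le (fun x => -1 * g x) f _ _ ltac:(intros x Hx; specialize (He x Hx); apply Rabs_le_between in He; lra) H Hf). lra.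
  - apply (II_le f g); auto. intros x Hx. specialize (He x Hx). apply Rabs_le_between in He; lra.
Qed.

Lemma II_rint_le f l b : II f l -> (forall x, 0 <= x -> 0 <= f x) -> 0 <= b -> RInt f 0 b <= l.
Proof.
  intros Hf Hp Hb. apply II_lb with (1 := Hf). exists b. intros b' Hb'.
  destruct Hf as [Hf _].
  rewrite <- (RInt_Chasles f 0 b b'). 2: apply Hf; lra.
  2: apply (@ex_RInt_Chasles_2 R_CompleteNormedModule) with 0; [lra| apply Hf; lra].
  assert (0 <= RInt f b b'). { apply RInt_ge_0. lra. apply (@ex_RInt_Chasles_2 R_CompleteNormedModule) with 0; [lra| apply Hf; lra].
    intros x Hx; apply Hp; lra. }
  change (plus (RInt f 0 b) (RInt f b b')) with (RInt f 0 b + RInt f b b'). lra.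
Qed.

Lemma II_pos (f : R -> R) l : II f l -> (forall x, 0 <= x -> 0 <= f x) ->
  (forall x, 0 <= x <= 1 -> continuous f x) -> (forall x, 0 < x < 1 -> 0 < f x) -> 0 < l.
Proof.
  intros Hf Hp Hc Hs. apply Rlt_le_trans with (RInt f 0 1).
  apply RInt_gt_0; auto. lra. apply II_rint_le; auto. lra.
Qed.

Lemma II_comp_lin f l u : 0 < u -> II f l -> II (fun t => u * f (u * t)) l.
Proof.
  intros Hu [H1 H2].
  assert (Hr : forall b, 0 <= b -> RInt (fun t => u * f (u * t)) 0 b = RInt f 0 (u * b)).
  { intros b Hb. transitivity (RInt f (u*0+0) (u*b+0)).
    - rewrite <- (RInt_comp_lin f u 0 0 b).
      + apply RInt_ext. intros x _. rewrite Rplus_0_r. reflexivity.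
      + rewrite Rmult_0_r, !Rplus_0_r. apply H1. nra.
    - f_equal; ring. }
  split.
  - intros b Hb. apply ex_RInt_ext with (fun y => scal u (f (u * y + 0))).
    intros x _. rewrite Rplus_0_r. reflexivity.
    apply (ex_RInt_comp_lin f u 0 0 b). rewrite Rmult_0_r, !Rplus_0_r. apply H1. nra.
  - apply is_lim_spec in H2. apply is_lim_spec. intro eps. destruct (H2 eps) as [M HM].
    exists (Rmax 0 (M / u)). intros y Hy. rewrite Hr.
    2: { assert (0 <= Rmax 0 (M/u)) by apply Rmax_l. lra. }
    apply HM. assert (M / u <= Rmax 0 (M/u)) by apply Rmax_r.
    apply Rmult_lt_compat_l with (r := u) in Hy; auto.
    assert (u * (M / u) = M) by (field; lra).
    assert (u * (M/u) <= u * Rmax 0 (M/u)) by (apply Rmult_le_compat_l; lra). lra.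
Qed.

Lemma II_exists (f : R -> R) C : (forall x, 0 <= x -> continuous f x) ->
  (forall x, 0 <= x -> Rabs (f x) <= C / (1 + x) ^ 2) -> exists l, II f l.
Proof.
  intros Hc Hd.
  assert (HC : 0 <= C) by (specialize (Hd 0 (Rle_refl 0)); assert (H0 := Rabs_pos (f 0));
     rewrite Rplus_0_r, pow1, Rdiv_1_r in Hd; lra).
  assert (Hex : forall a b, 0 <= a -> a <= b -> ex_RInt f a b).
  { intros a b Ha Hab. apply (@ex_RInt_continuous R_CompleteNormedModule). intros z Hz.
    rewrite Rmin_left, Rmax_right in Hz by lra. apply Hc; lra. }
  assert (Hg : forall a b, 0 <= a -> a <= b -> RInt (fun x => C / (1 + x) ^ 2) a b = C / (1 + a) - C / (1 + b)).
  { intros a b Ha Hab. apply is_RInt_unique.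
    replace (C / (1 + a) - C / (1 + b)) with (minus ((fun x => - C / (1 + x)) b) ((fun x => - C / (1 + x)) a)).
    2:{ unfold minus, plus, opp; simpl. field. lra. }
    apply (@is_RInt_derive R_CompleteNormedModule (fun x => - C / (1 + x))).
    - intros x Hx. rewrite Rmin_left, Rmax_right in Hx by lra.
      auto_derive. nz. field. lra.
    - intros x Hx. rewrite Rmin_left, Rmax_right in Hx by lra.
      apply deriv_cont with (-2 * C / (1 + x) ^ 3). auto_derive. nz. field. lra. }
  assert (Hb : forall a b, 0 <= a -> a <= b -> Rabs (RInt f 0 b - RInt f 0 a) <= C / (1 + a)).
  { intros a b Ha Hab.
    assert (Hr : RInt f 0 b - RInt f 0 a = RInt f a b) by (rewrite <- (RChasles f 0 a b) by (apply Hex; lra); ring).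
    rewrite Hr.
    eapply Rle_trans. apply abs_RInt_le. auto. apply Hex; lra.
    eapply Rle_trans. apply RInt_le with (g := fun x => C / (1 + x) ^ 2). auto.
    apply (@ex_RInt_continuous R_CompleteNormedModule). intros z Hz. rewrite Rmin_left, Rmax_right in Hz by lra.
    apply continuous_comp with (g := Rabs). apply Hc; lra. apply continuous_Rabs.
    apply (@ex_RInt_continuous R_CompleteNormedModule). intros z Hz. rewrite Rmin_left, Rmax_right in Hz by lra.
    apply deriv_cont with (-2 * C / (1 + z) ^ 3). auto_derive. nz. field. lra.
    intros x Hx. apply Hd. lra.
    rewrite Hg by auto. assert (0 <= C / (1 + b)) by (apply Rdiv_le_0_compat; lra). lra. }
  set (u n := RInt f 0 (INR n)).
  assert (Hcau : ex_lim_seq_cauchy u).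
  { intro eps. destruct (nat_unbounded (C / eps)) as [N HN]. exists N. intros n m Hn Hm.
    assert (HNp := pos_INR N).
    assert (Hk : C / (1 + INR N) < eps).
    { apply Rmult_lt_reg_r with (1 + INR N). lra. unfold Rdiv; rewrite Rmult_assoc, Rinv_l by lra.
      rewrite Rmult_1_r. apply Rmult_lt_reg_r with (/ eps). apply Rinv_0_lt_compat, cond_pos.
      replace (eps * (1 + INR N) * / eps) with (1 + INR N) by (field; apply Rgt_not_eq, cond_pos).
      unfold Rdiv in HN. lra. }
    assert (Hmono : forall k, (N <= k)%nat -> INR N <= INR k) by (intros; apply le_INR; auto).
    unfold u. destruct (Compare_dec.le_lt_dec n m) as [Hnm|Hnm].
    - rewrite Rabs_minus_sym. eapply Rle_lt_trans. apply Hb. apply pos_INR. apply le_INR; auto.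
      eapply Rle_lt_trans; [|apply Hk]. apply Rmult_le_compat_l. auto.
      apply Rinv_le_contravar. lra. specialize (Hmono n Hn). lra.
    - eapply Rle_lt_trans. apply Hb. apply pos_INR. apply le_INR; lia.
      eapply Rle_lt_trans; [|apply Hk]. apply Rmult_le_compat_l. auto.
      apply Rinv_le_contravar. lra. specialize (Hmono m Hm). lra. }
  apply ex_lim_seq_cauchy_corr in Hcau. destruct Hcau as [l Hl].
  exists l. split. intros b Hb0. apply Hex; lra.
  apply is_lim_spec. intro eps. apply is_lim_seq_spec in Hl.
  assert (He2 : 0 < eps / 2) by (assert (H := cond_pos eps); lra).
  destruct (Hl (mkposreal _ He2)) as [N1 HN1].
  destruct (nat_unbounded (C / (eps / 2))) as [N2 HN2].
  set (N := Nat.max N1 N2).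
  exists (INR N). intros y Hy.
  assert (HNp := pos_INR N).
  specialize (HN1 N (Nat.le_max_l _ _)). simpl in HN1. unfold u in HN1.
  assert (HN2' : INR N2 <= INR N) by (apply le_INR, Nat.le_max_r).
  assert (Hk : C / (1 + INR N) < eps / 2).
  { apply Rmult_lt_reg_r with (1 + INR N). lra. unfold Rdiv; rewrite Rmult_assoc, Rinv_l by lra.
    rewrite Rmult_1_r. apply Rmult_lt_reg_r with (/ (eps/2)). apply Rinv_0_lt_compat; auto.
    replace (eps * / 2 * (1 + INR N) * / (eps/2)) with (1 + INR N) by (field; apply Rgt_not_eq, cond_pos).
    unfold Rdiv in HN2. lra. }
  assert (H := Hb (INR N) y HNp (Rlt_le _ _ Hy)).
  replace (RInt f 0 y - l) with ((RInt f 0 y - RInt f 0 (INR N)) + (RInt f 0 (INR N) - l)) by ring.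
  eapply Rle_lt_trans. apply Rabs_triang. lra.
Qed.

Lemma II_to_gen f g l : II f l -> (forall x, 0 < x -> f x = g x) ->
  is_RInt_gen g (at_point 0) (Rbar_locally p_infty) l.
Proof.
  intros [H1 H2] He.
  apply is_RInt_gen_ext with f.
  { apply Filter_prod with (fun a => a = 0) (fun b => 0 < b).
    reflexivity. exists 0. auto.
    intros x y -> Hy z Hz. simpl in Hz. rewrite Rmin_left, Rmax_right in Hz by lra. apply He; lra. }
  apply filterlimi_lim_ext_loc with (fun ab => RInt f (fst ab) (snd ab)).
  { apply Filter_prod with (fun a => a = 0) (fun b => 0 < b).
    reflexivity. exists 0. auto.
    intros x y -> Hy. simpl. apply (@RInt_correct R_CompleteNormedModule). apply H1. lra. }
  intros P HP. apply H2 in HP. destruct HP as [M HM].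
  apply Filter_prod with (fun a => a = 0) (fun b => M < b).
  reflexivity. exists M. auto.
  intros x y -> Hy. simpl. apply HM. auto.
Qed.


Lemma cm (f g : R -> R) x : continuous f x -> continuous g x -> continuous (fun y => f y * g y) x.
Proof. intros H1 H2. apply continuity_pt_filterlim. apply continuity_pt_mult; apply continuity_pt_filterlim; auto. Qed.
Lemma cpl (f g : R -> R) x : continuous f x -> continuous g x -> continuous (fun y => f y + g y) x.
Proof. intros H1 H2. apply continuity_pt_filterlim. apply continuity_pt_plus; apply continuity_pt_filterlim; auto. Qed.
Lemma cmi (f g : R -> R) x : continuous f x -> continuous g x -> continuous (fun y => f y - g y) x.
Proof. intros H1 H2. apply continuity_pt_filterlim. apply continuity_pt_minus; apply continuity_pt_filterlim; auto. Qed.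
Lemma cdv (f g : R -> R) x : continuous f x -> continuous g x -> g x <> 0 -> continuous (fun y => f y / g y) x.
Proof. intros H1 H2 H3. apply continuity_pt_filterlim. apply continuity_pt_div; try apply continuity_pt_filterlim; auto. Qed.
Lemma cco (f g : R -> R) x : continuous f x -> continuous g (f x) -> continuous (fun y => g (f y)) x.
Proof. intros H1 H2. apply continuity_pt_filterlim. apply (continuity_pt_comp f g); apply continuity_pt_filterlim; auto. Qed.
Lemma cexp x : continuous exp x.
Proof. apply deriv_cont with (exp x). apply is_derive_Reals, derivable_pt_lim_exp. Qed.
Lemma cpow n x : continuous (fun y => y ^ n) x.
Proof. apply deriv_cont with (INR n * x ^ (pred n)). apply is_derive_Reals, derivable_pt_lim_pow. Qed.
Lemma ccst (c : R) (x : R) : continuous (fun _ : R => c) x.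
Proof. apply deriv_cont with 0. apply is_derive_Reals, derivable_pt_lim_const. Qed.
Lemma cid x : continuous (fun y : R => y) x.
Proof. apply deriv_cont with 1. apply is_derive_Reals, derivable_pt_lim_id. Qed.

Definition Int (f : R -> R) := real (Lim (fun B => RInt f 0 B) p_infty).
Lemma II_Int f l : II f l -> Int f = l.
Proof. intros [_ H]. unfold Int. rewrite (is_lim_unique _ _ _ H). reflexivity. Qed.

Lemma domK b n s : 0 < b -> 0 < s -> exists C, forall x, 0 <= x ->
   pc b x ^ n * exp (- s * pc b x) <= C / (1 + x) ^ 3.
Proof.
  intros Hb Hs. destruct (dom3 b n s Hb Hs) as [C HC]. exists C. intros x Hx.
  specialize (HC x Hx). assert (0 < (1 + x) ^ 3) by (apply pow_lt; lra).
  apply Rmult_le_reg_l with ((1 + x) ^ 3). auto.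
  replace ((1 + x) ^ 3 * (C / (1 + x) ^ 3)) with C by (field; lra). auto.
Qed.

Lemma II_dom (f : R -> R) (g : R -> R) C : (forall x, 0 <= x -> continuous f x) ->
  (forall x, 0 <= x -> Rabs (f x) <= g x) -> (forall x, 0 <= x -> g x <= C / (1 + x) ^ 3) ->
  II f (Int f).
Proof.
  intros Hc H1 H2. destruct (II_exists f C) as [l Hl]; auto.
  intros x Hx. eapply Rle_trans. apply H1; auto. eapply Rle_trans. apply H2; auto.
  assert (HC : 0 <= C). { specialize (H1 0 (Rle_refl 0)). specialize (H2 0 (Rle_refl 0)).
    rewrite Rplus_0_r, pow1, Rdiv_1_r in H2. assert (H := Rabs_pos (f 0)). lra. }
  unfold Rdiv. apply Rmult_le_compat_l. auto. apply Rinv_le_contravar. apply pow_lt; lra.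
  replace ((1+x)^3) with ((1+x)^2 * (1+x)) by ring.
  assert (0 < (1+x)^2) by (apply pow_lt; lra). nra.
  rewrite (II_Int f l Hl). auto.
Qed.

Definition Kf b n s x := (- pc b x) ^ n * exp (- s * pc b x) / (1 + x).
Definition Ka b n s x := pc b x ^ n * exp (- s * pc b x) / (1 + x).

Lemma Kf_cont b n s x : 0 < b -> 0 <= x -> continuous (Kf b n s) x.
Proof.
  intros Hb Hx. unfold Kf. apply cdv. apply cm.
  apply (cco (fun y => - pc b y) (fun y => y ^ n)). apply (cco (pc b) Ropp). apply pc_cont; auto.
  apply continuity_pt_filterlim, continuity_pt_opp, continuity_pt_id. apply cpow.
  apply (cco (fun y => - s * pc b y) exp). apply cm. apply ccst. apply pc_cont; auto. apply cexp.
  apply cpl. apply ccst. apply cid. lra.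
Qed.

Lemma Ka_cont b n s x : 0 < b -> 0 <= x -> continuous (Ka b n s) x.
Proof.
  intros Hb Hx. unfold Ka. apply cdv. apply cm.
  apply (cco (pc b) (fun y => y ^ n)). apply pc_cont; auto. apply cpow.
  apply (cco (fun y => - s * pc b y) exp). apply cm. apply ccst. apply pc_cont; auto. apply cexp.
  apply cpl. apply ccst. apply cid. lra.
Qed.

Lemma Ka_bound b n s x : 0 <= x -> Ka b n s x <= pc b x ^ n * exp (- s * pc b x).
Proof.
  intro Hx. unfold Ka. assert (0 <= pc b x ^ n * exp (- s * pc b x)).
  { apply Rmult_le_pos. apply pow_le, pc_ge0. left; apply exp_pos. }
  unfold Rdiv. rewrite <- (Rmult_1_r (pc b x ^ n * exp (- s * pc b x))) at 2.
  apply Rmult_le_compat_l; auto. rewrite <- Rinv_1. apply Rinv_le_contravar; lra.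
Qed.

Lemma Ka_nonneg b n s x : 0 <= x -> 0 <= Ka b n s x.
Proof.
  intro Hx. unfold Ka. apply Rdiv_le_0_compat. apply Rmult_le_pos. apply pow_le, pc_ge0. left; apply exp_pos. lra.
Qed.

Lemma Kf_abs b n s x : 0 <= x -> Rabs (Kf b n s x) = Ka b n s x.
Proof.
  intro Hx. unfold Kf, Ka.
  unfold Rdiv. rewrite !Rabs_mult, Rabs_Rinv by lra. rewrite <- RPow_abs, Rabs_Ropp.
  rewrite (Rabs_pos_eq (pc b x)) by apply pc_ge0. rewrite (Rabs_pos_eq (exp _)) by (left; apply exp_pos).
  rewrite (Rabs_pos_eq (1 + x)) by lra. reflexivity.
Qed.

Lemma Kf_II b n s : 0 < b -> 0 < s -> II (Kf b n s) (Int (Kf b n s)).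
Proof.
  intros Hb Hs. destruct (domK b n s Hb Hs) as [C HC].
  apply II_dom with (fun x => pc b x ^ n * exp (- s * pc b x)) C; auto.
  intros; apply Kf_cont; auto. intros x Hx. rewrite Kf_abs by auto. apply Ka_bound; auto.
Qed.

Lemma Ka_II b n s : 0 < b -> 0 < s -> II (Ka b n s) (Int (Ka b n s)).
Proof.
  intros Hb Hs. destruct (domK b n s Hb Hs) as [C HC].
  apply II_dom with (fun x => pc b x ^ n * exp (- s * pc b x)) C; auto.
  intros; apply Ka_cont; auto. intros x Hx. rewrite Rabs_pos_eq by (apply Ka_nonneg; auto). apply Ka_bound; auto.
Qed.

Definition Fv b n s := Int (Kf b n s).

Lemma Fv_derive b n s : 0 < b -> 0 < s -> is_derive (Fv b n) s (Fv b (S n) s).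
Proof.
  intros Hb Hs. apply is_derive_Reals. intros eps Heps.
  set (M := Int (Ka b (S (S n)) (s / 2))).
  assert (Hs2 : 0 < s / 2) by lra.
  assert (HM : II (Ka b (S (S n)) (s / 2)) M) by (apply Ka_II; auto).
  assert (HM0 : 0 <= M).
  { apply II_le with (fun _ => 0) (Ka b (S (S n)) (s / 2)); auto. intros; apply Ka_nonneg; auto.
    split. intros; apply ex_RInt_const. apply is_lim_ext with (fun _ => 0). intros; rewrite RInt_const; unfold scal; simpl; unfold mult; simpl; ring.
    apply is_lim_const. }
  assert (Hd : 0 < Rmin (s / 2) (eps / (M + 1))).
  { apply Rmin_pos. lra. apply Rdiv_lt_0_compat; lra. }
  exists (mkposreal _ Hd). intros h Hh0 Hh. simpl in Hh.
  assert (Hh1 : Rabs h < s / 2) by (eapply Rlt_le_trans; [apply Hh| apply Rmin_l]).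
  assert (Hh2 : Rabs h < eps / (M + 1)) by (eapply Rlt_le_trans; [apply Hh| apply Rmin_r]).
  assert (Hsh : 0 < s + h) by (apply Rabs_lt_between in Hh1; lra).
  assert (H1 := Kf_II b n (s + h) Hb Hsh).
  assert (H2 := Kf_II b n s Hb Hs).
  assert (H3 := II_scal _ _ h (Kf_II b (S n) s Hb Hs)).
  assert (H4 := II_minus _ _ _ _ (II_minus _ _ _ _ H1 H2) H3).
  assert (H5 := II_scal _ _ (h ^ 2) HM).
  assert (Hpt : forall x, 0 <= x -> Rabs (Kf b n (s + h) x - Kf b n s x - h * Kf b (S n) s x) <= h ^ 2 * Ka b (S (S n)) (s / 2) x).
  { intros x Hx. unfold Kf, Ka. set (p := pc b x).
    assert (Hp : 0 <= p) by apply pc_ge0.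
    assert (Hx1 : 0 < 1 + x) by lra.
    replace ((- p) ^ n * exp (- (s + h) * p) / (1 + x) - (- p) ^ n * exp (- s * p) / (1 + x) -
      h * ((- p) ^ S n * exp (- s * p) / (1 + x))) with
      ((- p) ^ n * exp (- s * p) / (1 + x) * (exp (- h * p) - 1 - (- h * p))).
    2:{ simpl. replace (- (s + h) * p) with (- s * p + - h * p) by ring. rewrite exp_plus. field. lra. }
    destruct (exp_bound2 (- h * p)) as [E1 E2].
    rewrite Rabs_mult. rewrite (Rabs_pos_eq (exp _ - _ - _)) by lra.
    assert (Ha : Rabs ((- p) ^ n * exp (- s * p) / (1 + x)) = p ^ n * exp (- s * p) / (1 + x)).
    { unfold Rdiv. rewrite !Rabs_mult, Rabs_Rinv by lra. rewrite <- RPow_abs, Rabs_Ropp.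
      rewrite (Rabs_pos_eq p), (Rabs_pos_eq (exp _)), (Rabs_pos_eq (1 + x)); auto; lra || (left; apply exp_pos). }
    rewrite Ha.
    assert (Hq : exp (Rabs (- h * p)) <= exp (s / 2 * p)).
    { rewrite Rabs_mult, Rabs_Ropp, (Rabs_pos_eq p) by auto.
      destruct (Req_dec p 0) as [->|Hp0]. rewrite !Rmult_0_r; lra.
      left. apply exp_increasing. apply Rmult_lt_compat_r; lra. }
    assert (Hr : exp (- s * p) * exp (s / 2 * p) = exp (- (s / 2) * p)).
    { rewrite <- exp_plus. replace (- s * p + s / 2 * p) with (- (s / 2) * p) by field. reflexivity. }
    assert (0 <= p ^ n * exp (- s * p) / (1 + x)).
    { apply Rdiv_le_0_compat. apply Rmult_le_pos. apply pow_le; auto. left; apply exp_pos. lra. }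
    apply Rle_trans with (p ^ n * exp (- s * p) / (1 + x) * ((- h * p) ^ 2 * exp (s / 2 * p))).
    apply Rmult_le_compat_l; auto. eapply Rle_trans. apply E2. apply Rmult_le_compat_l. apply pow2_ge_0. auto.
    right. replace (p ^ S (S n)) with (p ^ n * p ^ 2) by (simpl; ring).
    rewrite <- Hr. simpl. field. lra. }
  assert (Hab := II_abs _ _ _ _ Hpt H4 H5).
  replace ((Fv b n (s + h) - Fv b n s) / h - Fv b (S n) s) with
    ((Int (Kf b n (s + h)) - Int (Kf b n s) - h * Int (Kf b (S n) s)) / h).
  2:{ unfold Fv. field. auto. }
  unfold Rdiv. rewrite Rabs_mult, Rabs_Rinv by auto.
  apply Rle_lt_trans with (h ^ 2 * M * / Rabs h).
  apply Rmult_le_compat_r. left; apply Rinv_0_lt_compat, Rabs_pos_lt; auto. auto.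
  replace (h ^ 2 * M * / Rabs h) with (Rabs h * M).
  2:{ rewrite <- (pow2_abs h). field. apply Rabs_no_R0; auto. }
  assert (Hh3 : 0 < Rabs h) by (apply Rabs_pos_lt; auto).
  apply Rle_lt_trans with (eps / (M + 1) * M).
  apply Rmult_le_compat_r; lra.
  apply Rmult_lt_reg_r with (M + 1). lra.
  replace (eps / (M + 1) * M * (M + 1)) with (eps * M) by (field; lra). nra.
Qed.


Lemma dmult (f g : R -> R) x df dg : is_derive f x df -> is_derive g x dg ->
  is_derive (fun y => f y * g y) x (df * g x + f x * dg).
Proof. intros H1 H2. apply is_derive_Reals. apply is_derive_Reals in H1, H2.
  apply (derivable_pt_lim_mult f g x df dg); auto. Qed.
Lemma dplus (f g : R -> R) x df dg : is_derive f x df -> is_derive g x dg ->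
  is_derive (fun y => f y + g y) x (df + dg).
Proof. intros H1 H2. apply is_derive_Reals. apply is_derive_Reals in H1, H2.
  apply (derivable_pt_lim_plus f g x df dg); auto. Qed.
Lemma dshift (F : R -> R) c x l : is_derive F (x + c) l -> is_derive (fun y => F (y + c)) x l.
Proof. intros H. apply is_derive_Reals. apply is_derive_Reals in H.
  replace l with (l * 1) by ring.
  apply (derivable_pt_lim_comp (fun y => y + c) F x 1 l); auto.
  replace 1 with (1 + 0) by ring. apply derivable_pt_lim_plus. apply derivable_pt_lim_id. apply derivable_pt_lim_const. Qed.
Lemma dscal (f : R -> R) k x df : is_derive f x df -> is_derive (fun y => k * f y) x (k * df).
Proof. intros H. apply is_derive_Reals. apply is_derive_Reals in H.
  replace (k * df) with (0 * f x + k * df) by ring.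
  apply (derivable_pt_lim_mult (fun _ => k) f x 0 df); auto. apply derivable_pt_lim_const. Qed.
Lemma did x : is_derive (fun y : R => y) x 1.
Proof. apply is_derive_Reals, derivable_pt_lim_id. Qed.

Lemma smooth_gen (f : R -> R) (G : nat -> R -> R) :
  (forall k x, 0 < x -> is_derive (G k) x (G (S k) x)) -> (forall x, 0 < x -> f x = G 0%nat x) ->
  forall n x, 0 < x -> Derive_n f n x = G n x /\ ex_derive_n f n x.
Proof.
  intros HG Hf n. induction n as [|n IH]; intros x Hx.
  - simpl. split; auto.
  - assert (Hloc : locally x (fun t => G n t = Derive_n f n t)).
    { exists (mkposreal x Hx). intros y Hy. change (Rabs (y - x) < x) in Hy.
      apply Rabs_lt_between in Hy. symmetry. apply IH. lra. }
    assert (Hd : is_derive (Derive_n f n) x (G (S n) x)).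
    { apply is_derive_ext_loc with (G n); auto. }
    split.
    + simpl. apply is_derive_unique; auto.
    + simpl. exists (G (S n) x). auto.
Qed.

Definition Gk b c k L := L * Fv b k (L + c) + INR k * Fv b (pred k) (L + c).

Lemma Gk_derive b c k L : 0 < b -> 0 < c -> 0 < L -> is_derive (Gk b c k) L (Gk b c (S k) L).
Proof.
  intros Hb Hc HL. unfold Gk.
  assert (Hs : 0 < L + c) by lra.
  eapply is_derive_ext. intro t; reflexivity.
  replace (L * Fv b (S k) (L + c) + INR (S k) * Fv b (pred (S k)) (L + c)) with
    ((1 * Fv b k (L + c) + L * Fv b (S k) (L + c)) + INR k * Fv b (S (pred k)) (L + c)).
  2:{ simpl pred. rewrite S_INR. destruct k. simpl. ring. simpl pred. ring. }
  apply (dplus (fun y => y * Fv b k (y + c)) (fun y => INR k * Fv b (pred k) (y + c))).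
  apply (dmult (fun y => y) (fun y => Fv b k (y + c))). apply did.
  apply (dshift (Fv b k)). apply Fv_derive; auto.
  apply (dscal (fun y => Fv b (pred k) (y + c))). apply (dshift (Fv b (pred k))).
  apply Fv_derive; auto.
Qed.

Lemma Iint_Fv alpha s : 2 < alpha -> 0 < s -> Iint alpha s = Fv (2 / alpha) 0 s.
Proof.
  intros Ha Hs. assert (Hb : 0 < 2 / alpha) by (apply Rdiv_lt_0_compat; lra).
  unfold Iint. apply is_RInt_gen_unique.
  apply II_to_gen with (Kf (2 / alpha) 0 s). apply Kf_II; auto.
  intros x Hx. unfold Kf. rewrite pc_pos by auto. simpl. rewrite Rmult_1_l. reflexivity.
Qed.


Definition Q b n t := pc b t ^ n * exp (- pc b t).
Definition hE b t := exp (- pc b t) * (1 - pc b t).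
Definition kE b a u t := exp (- a * pc b t) / (1 + u * t).
Definition Eint b a u t := hE b t * kE b a u t.
Definition Ev b a u := Int (Eint b a u).

Lemma cpc b x : 0 < b -> continuous (pc b) x.
Proof. apply pc_cont. Qed.

Lemma cexpm b (a : R) x : 0 < b -> continuous (fun t => exp (- a * pc b t)) x.
Proof. intro Hb. apply (cco (fun t => - a * pc b t) exp). apply cm. apply ccst. apply cpc; auto. apply cexp. Qed.

Lemma Q_cont b n x : 0 < b -> continuous (Q b n) x.
Proof. intro Hb. unfold Q. apply cm. apply (cco (pc b) (fun y => y ^ n)). apply cpc; auto. apply cpow.
  apply (cco (fun t => - pc b t) exp). apply (cco (pc b) Ropp). apply cpc; auto.
  apply continuity_pt_filterlim, continuity_pt_opp, continuity_pt_id. apply cexp. Qed.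

Lemma hE_cont b x : 0 < b -> continuous (hE b) x.
Proof. intro Hb. unfold hE. apply cm.
  apply (cco (fun t => - pc b t) exp). apply (cco (pc b) Ropp). apply cpc; auto.
  apply continuity_pt_filterlim, continuity_pt_opp, continuity_pt_id. apply cexp.
  apply cmi. apply ccst. apply cpc; auto. Qed.

Lemma Eint_cont b a u x : 0 < b -> 0 <= u -> 0 <= x -> continuous (Eint b a u) x.
Proof. intros Hb Hu Hx. unfold Eint. apply cm. apply hE_cont; auto. unfold kE.
  apply cdv. apply cexpm; auto. apply cpl. apply ccst. apply cm. apply ccst. apply cid.
  apply Rgt_not_eq. nra. Qed.

Lemma Q_nonneg b n t : 0 <= Q b n t.
Proof. unfold Q. apply Rmult_le_pos. apply pow_le, pc_ge0. left; apply exp_pos. Qed.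

Lemma Q_II b n : 0 < b -> II (Q b n) (Int (Q b n)).
Proof.
  intros Hb. destruct (domK b n 1 Hb Rlt_0_1) as [C HC].
  apply II_dom with (Q b n) C. intros; apply Q_cont; auto.
  intros; rewrite Rabs_pos_eq by apply Q_nonneg; lra.
  intros x Hx. unfold Q. specialize (HC x Hx). rewrite <- Ropp_mult_distr_l, Rmult_1_l in HC. auto.
Qed.

Lemma hE_abs b t : Rabs (hE b t) <= Q b 0 t + Q b 1 t.
Proof.
  unfold hE, Q. assert (H := pc_ge0 b t). assert (He := exp_pos (- pc b t)).
  rewrite Rabs_mult, Rabs_pos_eq by lra. simpl. rewrite Rmult_1_r.
  apply Rabs_le_between' in H || idtac.
  assert (Rabs (1 - pc b t) <= 1 + pc b t) by (apply Rabs_le; lra). nra.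
Qed.

Lemma kE_le1 b a u t : 0 <= a -> 0 <= u -> 0 <= t -> 0 < kE b a u t <= 1.
Proof.
  intros Ha Hu Ht. unfold kE. assert (H := pc_ge0 b t). split.
  apply Rdiv_lt_0_compat. apply exp_pos. nra.
  assert (exp (- a * pc b t) <= 1) by (rewrite <- exp_0; apply exp_le_inv || idtac; destruct (Req_dec (a * pc b t) 0) as [E|E];
     [replace (- a * pc b t) with 0 by lra; lra | left; apply exp_increasing; nra]).
  apply Rmult_le_reg_r with (1 + u * t). nra. unfold Rdiv; rewrite Rmult_assoc, Rinv_l by nra. nra.
Qed.

Lemma Eint_II b a u : 0 < b -> 0 <= a -> 0 <= u -> II (Eint b a u) (Ev b a u).
Proof.
  intros Hb Ha Hu. destruct (domK b 0 1 Hb Rlt_0_1) as [C0 H0]. destruct (domK b 1 1 Hb Rlt_0_1) as [C1 H1].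
  apply II_dom with (fun t => Q b 0 t + Q b 1 t) (C0 + C1).
  intros; apply Eint_cont; auto.
  intros x Hx. unfold Eint. rewrite Rabs_mult. destruct (kE_le1 b a u x Ha Hu Hx) as [K1 K2].
  rewrite (Rabs_pos_eq (kE _ _ _ _)) by lra. assert (HH := hE_abs b x). assert (0 <= Rabs (hE b x)) by apply Rabs_pos. nra.
  intros x Hx. specialize (H0 x Hx). specialize (H1 x Hx). unfold Q.
  rewrite <- Ropp_mult_distr_l, Rmult_1_l in H0, H1. unfold Rdiv in *. rewrite Rmult_plus_distr_r. simpl pow in *. repeat rewrite Rmult_1_l in *. repeat rewrite Rmult_1_r in *. lra.
Qed.


Lemma pc_scale b L t : 0 < b -> 0 < L -> 0 <= t -> pc b (Rpower L (- / b) * t) = pc b t / L.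
Proof.
  intros Hb HL Ht. assert (Hu : 0 < Rpower L (- / b)) by (unfold Rpower; apply exp_pos).
  destruct Ht as [Ht|Ht].
  - rewrite !pc_pos by (try apply Rmult_lt_0_compat; auto).
    rewrite <- Rpower_mult_distr by auto. rewrite Rpower_mult.
    replace (- / b * b) with (- (1)) by (field; lra). rewrite Rpower_Ropp, Rpower_1 by auto.
    unfold Rdiv. ring.
  - subst t. rewrite Rmult_0_r, pc_neg by lra. unfold Rdiv; ring.
Qed.

Lemma Dlink b c L : 0 < b -> 0 < c -> 0 < L ->
  Gk b c 1 L = Rpower L (- / b) * Ev b (c / L) (Rpower L (- / b)).
Proof.
  intros Hb Hc HL. set (u := Rpower L (- / b)).
  assert (Hu : 0 < u) by (unfold u, Rpower; apply exp_pos).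
  assert (Hs : 0 < L + c) by lra.
  assert (H1 := II_plus _ _ _ _ (II_scal _ _ L (Kf_II b 1 (L + c) Hb Hs)) (II_scal _ _ (INR 1) (Kf_II b 0 (L + c) Hb Hs))).
  assert (H2 := II_comp_lin _ _ u Hu H1).
  assert (H3 := II_scal _ _ u (Eint_II b (c / L) u Hb ltac:(apply Rdiv_le_0_compat; lra) ltac:(lra))).
  unfold Gk. simpl pred. unfold Fv.
  apply (II_unique (fun t => u * Eint b (c / L) u t)); auto.
  apply II_ext with (2 := H2).
  intros t Ht. f_equal. unfold Kf, Eint, hE, kE. assert (Hpc := pc_scale b L t Hb HL Ht). fold u in Hpc. rewrite Hpc.
  simpl INR. simpl pow.
  replace (- (L + c) * (pc b t / L)) with (- pc b t + - (c / L) * pc b t) by (field; lra).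
  rewrite exp_plus. field. split; apply Rgt_not_eq; nra.
Qed.


Lemma pc_lt1 b t : 0 < b -> t < 1 -> pc b t < 1.
Proof.
  intros Hb Ht. destruct (Rlt_le_dec 0 t).
  - rewrite pc_pos by auto. rewrite <- (Rpower_1_base b). apply Rlt_Rpower_l; auto.
  - rewrite pc_neg by auto. lra.
Qed.

Lemma pc_ge1 b t : 0 < b -> 1 <= t -> 1 <= pc b t.
Proof.
  intros Hb Ht. rewrite pc_pos by lra. rewrite <- (Rpower_1_base b). apply Rle_Rpower_l; lra.
Qed.

Lemma exp_mono_le x y : x <= y -> exp x <= exp y.
Proof. intros [H|H]. left; apply exp_increasing; auto. subst; lra. Qed.

Lemma TP2E b a a' u u' : 0 < b -> 0 <= a -> a < a' -> 0 <= u -> u <= u' ->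
  0 <= Ev b a u -> 0 < Ev b a' u'.
Proof.
  intros Hb Ha Haa Hu Huu HE.
  set (d := a' - a).
  set (r1 := exp (- d) * (1 + u) / (1 + u')).
  assert (Hr1 : 0 < r1) by (unfold r1; apply Rdiv_lt_0_compat; [apply Rmult_lt_0_compat; [apply exp_pos|lra]|lra]).
  assert (HD := II_minus _ _ _ _ (Eint_II b a' u' Hb ltac:(lra) ltac:(lra)) (II_scal _ _ r1 (Eint_II b a u Hb Ha Hu))).
  assert (Hform : forall t, 0 <= t -> Eint b a' u' t - r1 * Eint b a u t =
     hE b t * exp (- a * pc b t) * (exp (- d * pc b t) * (1 + u') * (1 + u * t) - exp (- d) * (1 + u) * (1 + u' * t))
       / ((1 + u' * t) * (1 + u') * (1 + u * t))).
  { intros t Ht. unfold Eint, kE, r1. replace (- a' * pc b t) with (- d * pc b t + - a * pc b t) by (unfold d; ring).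
    rewrite exp_plus. field. repeat split; apply Rgt_not_eq; nra. }
  assert (Hpos : 0 < Ev b a' u' - r1 * Ev b a u).
  { apply II_pos with (1 := HD).
    - intros t Ht. rewrite Hform by auto. apply Rdiv_le_0_compat. 2: apply Rmult_lt_0_compat; [apply Rmult_lt_0_compat|]; nra.
      assert (He := exp_pos (- a * pc b t)). unfold hE.
      assert (Hp := exp_pos (- pc b t)).
      destruct (Rlt_le_dec t 1) as [Ht1|Ht1].
      + assert (Hp1 := pc_lt1 b t Hb Ht1). assert (H0 := pc_ge0 b t).
        assert (exp (- d) <= exp (- d * pc b t)) by (apply exp_mono_le; unfold d; nra).
        assert ((1 + u) * (1 + u' * t) <= (1 + u') * (1 + u * t)) by nra.
        assert (0 < exp (-d)) by apply exp_pos.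
        assert (0 <= exp (- d * pc b t) * (1 + u') * (1 + u * t) - exp (- d) * (1 + u) * (1 + u' * t)).
        { assert (exp (- d) * ((1 + u) * (1 + u' * t)) <= exp (- d * pc b t) * ((1 + u') * (1 + u * t))).
          apply Rmult_le_compat; try lra; apply Rmult_le_pos; nra. nra. }
        apply Rmult_le_pos; auto. apply Rmult_le_pos; [apply Rmult_le_pos|]; lra.
      + assert (Hp1 := pc_ge1 b t Hb Ht1).
        assert (exp (- d * pc b t) <= exp (- d)) by (apply exp_mono_le; unfold d; nra).
        assert ((1 + u') * (1 + u * t) <= (1 + u) * (1 + u' * t)) by nra.
        assert (0 < exp (- d * pc b t)) by apply exp_pos.
        assert (exp (- d * pc b t) * (1 + u') * (1 + u * t) - exp (- d) * (1 + u) * (1 + u' * t) <= 0).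
        { assert (exp (- d * pc b t) * ((1 + u') * (1 + u * t)) <= exp (- d) * ((1 + u) * (1 + u' * t))).
          apply Rmult_le_compat; try lra; apply Rmult_le_pos; nra. nra. }
        assert (exp (- pc b t) * (1 - pc b t) * exp (- a * pc b t) <= 0).
        { assert (0 <= exp (- pc b t) * (pc b t - 1) * exp (- a * pc b t)) by (apply Rmult_le_pos; [apply Rmult_le_pos|]; lra). nra. }
        nra.
    - intros t Ht. apply cmi. apply Eint_cont; auto; lra. apply cm. apply ccst. apply Eint_cont; auto; lra.
    - intros t Ht. rewrite Hform by lra. apply Rdiv_lt_0_compat. 2: apply Rmult_lt_0_compat; [apply Rmult_lt_0_compat|]; nra.
      assert (He := exp_pos (- a * pc b t)). unfold hE.
      assert (Hp := exp_pos (- pc b t)).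
      assert (Hp1 := pc_lt1 b t Hb ltac:(lra)). rewrite pc_pos in Hp1, He, Hp |- * by lra.
      assert (Hq : 0 < Rpower t b) by (unfold Rpower; apply exp_pos).
      assert (exp (- d) < exp (- d * Rpower t b)) by (apply exp_increasing; unfold d; nra).
      assert ((1 + u) * (1 + u' * t) <= (1 + u') * (1 + u * t)) by nra.
      assert (0 < exp (-d)) by apply exp_pos.
      assert (0 < exp (- d * Rpower t b) * (1 + u') * (1 + u * t) - exp (- d) * (1 + u) * (1 + u' * t)).
      { assert (exp (- d) * ((1 + u) * (1 + u' * t)) < exp (- d * Rpower t b) * ((1 + u') * (1 + u * t))).
        apply Rle_lt_trans with (exp (-d) * ((1 + u') * (1 + u * t))). apply Rmult_le_compat_l; lra.
        apply Rmult_lt_compat_r. apply Rmult_lt_0_compat; nra. lra. nra. }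
      repeat apply Rmult_lt_0_compat; lra. }
  assert (0 <= r1 * Ev b a u) by (apply Rmult_le_pos; lra). lra.
Qed.


Lemma Phi_derive b t : 0 < b -> 0 <= t ->
  is_derive (fun y => y * exp (- pc b y)) t (Q b 0 t - b * Q b 1 t).
Proof.
  intros Hb [Ht|Ht].
  - apply is_derive_ext_loc with (fun y => y * exp (- Rpower y b)).
    { exists (mkposreal t Ht). intros y Hy. change (Rabs (y - t) < t) in Hy.
      apply Rabs_lt_between in Hy. rewrite pc_pos by lra. reflexivity. }
    unfold Q. rewrite pc_pos by auto.
    apply is_derive_Reals.
    replace (Rpower t b ^ 0 * exp (- Rpower t b) - b * (Rpower t b ^ 1 * exp (- Rpower t b)))
      with (1 * exp (- Rpower t b) + t * (exp (- Rpower t b) * (- (b * Rpower t (b - 1))))).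
    2:{ assert (Htp : t * Rpower t (b - 1) = Rpower t b).
        { rewrite <- (Rpower_1 t) at 1 by auto. rewrite <- Rpower_plus. f_equal; ring. }
        rewrite <- Htp. simpl. ring. }
    apply (derivable_pt_lim_mult (fun y => y) (fun y => exp (- Rpower y b))).
    apply derivable_pt_lim_id.
    apply (derivable_pt_lim_comp (fun y => - Rpower y b) exp).
    apply (derivable_pt_lim_opp (fun y => Rpower y b)). apply derivable_pt_lim_power; auto.
    apply derivable_pt_lim_exp.
  - subst t. unfold Q. rewrite pc_neg by lra. simpl.
    replace ((1 * exp (- 0)) - b * (0 * 1 * exp (- 0))) with 1 by (rewrite Ropp_0, exp_0; ring).
    apply is_derive_Reals. intros eps Heps.
    assert (Hc : continuity_pt (fun y => exp (- pc b y)) 0).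
    { apply continuity_pt_filterlim. apply (cco (fun y => - pc b y) exp). apply (cco (pc b) Ropp). apply cpc; auto.
      apply continuity_pt_filterlim, continuity_pt_opp, continuity_pt_id. apply cexp. }
    destruct (Hc eps Heps) as [del [Hdel Hd]].
    exists (mkposreal del Hdel). intros h Hh0 Hh.
    assert (Hd' : R_dist (exp (- pc b h)) (exp (- pc b 0)) < eps).
    { apply Hd. split. split. exact I. auto. simpl. unfold R_dist. rewrite Rminus_0_r. exact Hh. }
    unfold R_dist in Hd'. rewrite (pc_neg b 0) in Hd' by lra. rewrite Ropp_0, exp_0 in Hd'.
    rewrite Rplus_0_l. rewrite (pc_neg b 0) by lra. rewrite Rmult_0_l, Rminus_0_r.
    replace (h * exp (- pc b h) / h - 1) with (exp (- pc b h) - 1) by (field; auto). auto.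
Qed.

Lemma Q_rel b : 0 < b -> Int (Q b 0) - b * Int (Q b 1) = 0.
Proof.
  intros Hb.
  assert (HD := II_minus _ _ _ _ (Q_II b 0 Hb) (II_scal _ _ b (Q_II b 1 Hb))).
  apply (II_unique _ _ _ HD). split.
  - intros B HB. apply (@ex_RInt_continuous R_CompleteNormedModule). intros z Hz.
    apply cmi. apply Q_cont; auto. apply cm. apply ccst. apply Q_cont; auto.
  - apply is_lim_ext_loc with (fun B => B * exp (- pc b B)).
    { exists 0. intros B HB. symmetry. apply is_RInt_unique.
      replace (B * exp (- pc b B)) with (minus ((fun y => y * exp (- pc b y)) B) ((fun y => y * exp (- pc b y)) 0)).
      2:{ unfold minus, plus, opp; simpl. ring. }
      apply (@is_RInt_derive R_CompleteNormedModule (fun y => y * exp (- pc b y))).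
      - intros x Hx. rewrite Rmin_left, Rmax_right in Hx by lra. apply Phi_derive; auto; lra.
      - intros x Hx. apply cmi. apply Q_cont; auto. apply cm. apply ccst. apply Q_cont; auto. }
    destruct (dom3 b 0 1 Hb Rlt_0_1) as [C HC].
    assert (HC0 : 0 <= C) by (specialize (HC 0 (Rle_refl 0)); assert (H := Rmult_le_pos ((1 + 0) ^ 3) (pc b 0 ^ 0 * exp (- (1) * pc b 0))); 
       assert (0 <= (1 + 0)^3) by (apply pow_le; lra); assert (0 <= pc b 0 ^ 0 * exp (- (1) * pc b 0)) by (apply Rmult_le_pos; [apply pow_le, pc_ge0|left; apply exp_pos]); nra).
    apply is_lim_spec. intro eps. exists (C / eps). intros B HB.
    assert (HCe : 0 <= C / eps) by (apply Rdiv_le_0_compat; [auto|apply cond_pos]).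
    assert (HB0 : 0 < B) by lra.
    specialize (HC B (Rlt_le _ _ HB0)). simpl in HC. rewrite Rmult_1_l in HC.
    replace (- (1) * pc b B) with (- pc b B) in HC by ring.
    rewrite Rminus_0_r. assert (He := exp_pos (- pc b B)).
    rewrite Rabs_pos_eq by nra.
    assert (H1 : B * exp (- pc b B) * (1 + B) ^ 2 <= C) by (simpl in *; nra).
    assert (H2 : C < eps * B) by (apply Rmult_lt_reg_r with (/ eps); [apply Rinv_0_lt_compat, cond_pos|];
        replace (eps * B * / eps) with B by (field; apply Rgt_not_eq, cond_pos); unfold Rdiv in HB; lra).
    assert (H3 : B <= B * (1 + B) ^ 2) by (simpl; nra).
    assert (Hep := cond_pos eps).
    apply Rmult_lt_reg_r with (B * (1 + B) ^ 2). simpl; nra.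
    nra.
Qed.

Lemma E0_neg b : 0 < b < 1 -> Ev b 0 0 < 0.
Proof.
  intros [Hb Hb1].
  assert (HP : 0 < Int (Q b 1)).
  { apply II_pos with (Q b 1). apply Q_II; auto. intros; apply Q_nonneg. intros; apply Q_cont; auto.
    intros x Hx. unfold Q. rewrite pc_pos by lra. simpl. rewrite Rmult_1_r.
    apply Rmult_lt_0_compat. unfold Rpower; apply exp_pos. apply exp_pos. }
  assert (HE : Ev b 0 0 = Int (Q b 0) - Int (Q b 1)).
  { apply II_Int. apply II_ext with (fun t => Q b 0 t - Q b 1 t).
    intros t Ht. unfold Q, Eint, hE, kE. simpl. rewrite Rmult_0_l, Rplus_0_r, Ropp_0, Rmult_0_l, exp_0. field.
    apply II_minus; apply Q_II; auto. }
  assert (Hrel := Q_rel b Hb). nra.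
Qed.


Lemma exR (f : R -> R) a b : 0 <= a <= b -> (forall x, 0 <= x -> continuous f x) -> ex_RInt f a b.
Proof. intros Hab Hc. apply (@ex_RInt_continuous R_CompleteNormedModule). intros z Hz.
  rewrite Rmin_left, Rmax_right in Hz by lra. apply Hc; lra. Qed.

Definition m2 b t := t * (Q b 0 t + Q b 1 t).

Lemma m2_II b : 0 < b -> II (m2 b) (Int (m2 b)).
Proof.
  intros Hb. destruct (dom3 b 0 1 Hb Rlt_0_1) as [C0 H0]. destruct (dom3 b 1 1 Hb Rlt_0_1) as [C1 H1].
  destruct (II_exists (m2 b) (C0 + C1)) as [l Hl].
  - intros x Hx. unfold m2. apply cm. apply cid. apply cpl; apply Q_cont; auto.
  - intros x Hx. specialize (H0 x Hx). specialize (H1 x Hx). unfold m2, Q.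
    replace (- (1) * pc b x) with (- pc b x) in H0, H1 by ring.
    assert (A0 := Q_nonneg b 0 x). assert (A1 := Q_nonneg b 1 x). unfold Q in A0, A1.
    rewrite Rabs_pos_eq by nra.
    assert (Hp : 0 < (1 + x) ^ 2) by (apply pow_lt; lra).
    apply Rmult_le_reg_r with ((1 + x) ^ 2). auto.
    replace ((C0 + C1) / (1 + x) ^ 2 * (1 + x) ^ 2) with (C0 + C1) by (field; lra).
    replace ((1 + x) ^ 3) with ((1 + x) ^ 2 * (1 + x)) in H0, H1 by ring.
    nra.
  - rewrite (II_Int _ _ Hl). auto.
Qed.

Lemma Esmall b a u : 0 < b < 1 -> 0 <= a -> 0 <= u ->
  Rabs (Ev b a u - Ev b 0 0) <= a * (Int (Q b 1) + Int (Q b 2)) + u * Int (m2 b).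
Proof.
  intros [Hb Hb1] Ha Hu.
  assert (HD := II_minus _ _ _ _ (Eint_II b a u Hb Ha Hu) (Eint_II b 0 0 Hb (Rle_refl 0) (Rle_refl 0))).
  assert (HB := II_plus _ _ _ _ (II_scal _ _ a (II_plus _ _ _ _ (Q_II b 1 Hb) (Q_II b 2 Hb))) (II_scal _ _ u (m2_II b Hb))).
  assert (Hpt : forall t, 0 <= t -> Rabs (Eint b a u t - Eint b 0 0 t) <= a * (Q b 1 t + Q b 2 t) + u * m2 b t).
  2: apply (II_abs _ _ _ _ Hpt HD HB).
  intros t Ht. unfold Eint, kE, m2.
  assert (E0 : exp (- 0 * pc b t) / (1 + 0 * t) = 1) by (rewrite Ropp_0, !Rmult_0_l, Rplus_0_r, exp_0; field).
  rewrite E0.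
  assert (Hp := pc_ge0 b t). set (p := pc b t) in *.
  assert (Hk1 : 1 - a * p - u * t <= exp (- a * p) / (1 + u * t)).
  { assert (H1 := exp_ineq1_le (- a * p)).
    apply Rmult_le_reg_r with (1 + u * t). nra.
    replace (exp (- a * p) / (1 + u * t) * (1 + u * t)) with (exp (- a * p)) by (field; nra).
    assert (0 <= a * p * u * t) by (repeat apply Rmult_le_pos; lra). nra. }
  assert (Hk2 : exp (- a * p) / (1 + u * t) <= 1).
  { apply Rmult_le_reg_r with (1 + u * t). nra.
    replace (exp (- a * p) / (1 + u * t) * (1 + u * t)) with (exp (- a * p)) by (field; nra).
    assert (exp (- a * p) <= exp 0) by (apply exp_mono_le; nra). rewrite exp_0 in H. nra. }
  replace (hE b t * (exp (- a * p) / (1 + u * t)) - hE b t * 1) with (hE b t * (exp (- a * p) / (1 + u * t) - 1)) by ring.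
  rewrite Rabs_mult. rewrite (Rabs_left1 (_ - 1)) by lra.
  assert (HH := hE_abs b t). fold p in HH. assert (0 <= Rabs (hE b t)) by apply Rabs_pos.
  apply Rle_trans with ((Q b 0 t + Q b 1 t) * (a * p + u * t)).
  apply Rmult_le_compat; lra.
  unfold Q. fold p. simpl. nra.
Qed.


Lemma RIntScal (f : R -> R) k a b : ex_RInt f a b -> RInt (fun x => k * f x) a b = k * RInt f a b.
Proof. intros H. apply (RInt_scal f a b k H). Qed.
Lemma exScal (f : R -> R) k a b : ex_RInt f a b -> ex_RInt (fun x => k * f x) a b.
Proof. intros H. apply (ex_RInt_scal f a b k H). Qed.

Lemma hE_pos b t : 0 < b -> 0 <= t < 1 -> 0 <= hE b t.
Proof. intros Hb Ht. unfold hE. assert (H := pc_lt1 b t Hb ltac:(lra)). apply Rmult_le_pos. left; apply exp_pos. lra. Qed.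

Lemma H1_pos b : 0 < b -> 0 < RInt (hE b) 0 (1 / 2).
Proof.
  intros Hb. apply RInt_gt_0. lra.
  - intros x Hx. unfold hE. assert (H := pc_lt1 b x Hb ltac:(lra)). apply Rmult_lt_0_compat. apply exp_pos. lra.
  - intros x Hx. apply hE_cont; auto.
Qed.

Lemma Elarge b a u : 0 < b < 1 -> 0 <= a -> 0 <= u ->
  (exp (- a * pc b (1 / 2)) * RInt (hE b) 0 (1 / 2) - exp (- a) * (Int (Q b 0) + Int (Q b 1))) / (1 + u) <= Ev b a u.
Proof.
  intros [Hb Hb1] Ha Hu. set (q := pc b (1/2)).
  assert (HE := Eint_II b a u Hb Ha Hu).
  assert (HQ := II_plus _ _ _ _ (Q_II b 0 Hb) (Q_II b 1 Hb)).
  set (H := Int (Q b 0) + Int (Q b 1)) in *.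
  set (H1 := RInt (hE b) 0 (1 / 2)).
  assert (HQc : forall x, 0 <= x -> continuous (fun t => Q b 0 t + Q b 1 t) x) by (intros; apply cpl; apply Q_cont; auto).
  assert (HEc : forall x, 0 <= x -> continuous (Eint b a u) x) by (intros; apply Eint_cont; auto).
  apply II_lb with (1 := HE). exists 1. intros B HB.
  rewrite <- (RChasles (Eint b a u) 0 (1/2) B) by (apply exR; auto; lra).
  assert (Hi : exp (- a * q) / (1 + u) * H1 <= RInt (Eint b a u) 0 (1 / 2)).
  { unfold H1. rewrite <- RIntScal by (apply exR; [lra|]; intros; apply hE_cont; auto).
    apply RInt_le. lra. apply exScal. apply exR. lra. intros; apply hE_cont; auto.
    apply exR; auto; lra.
    intros x Hx. unfold Eint, kE.
    assert (Hh := hE_pos b x Hb ltac:(lra)).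
    assert (Hpq : pc b x <= q).
    { unfold q. rewrite (pc_pos b (1/2)) by lra. rewrite pc_pos by lra. apply Rle_Rpower_l; lra. }
    assert (exp (- a * q) <= exp (- a * pc b x)) by (apply exp_mono_le; nra).
    assert (Hd : / (1 + u) <= / (1 + u * x)) by (apply Rinv_le_contravar; nra).
    assert (0 < exp (- a * q)) by apply exp_pos.
    unfold Rdiv. assert (0 < / (1 + u)) by (apply Rinv_0_lt_compat; lra).
    assert (exp (- a * q) * / (1 + u) <= exp (- a * pc b x) * / (1 + u * x)) by (apply Rmult_le_compat; lra).
    nra. }
  assert (Hii : - (exp (- a) / (1 + u)) * H <= RInt (Eint b a u) (1 / 2) B).
  { assert (HR : RInt (fun t => Q b 0 t + Q b 1 t) (1 / 2) B <= H).
    { apply Rle_trans with (RInt (fun t => Q b 0 t + Q b 1 t) 0 B).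
      - rewrite <- (RChasles (fun t => Q b 0 t + Q b 1 t) 0 (1/2) B) by (apply exR; auto; lra).
        assert (0 <= RInt (fun t => Q b 0 t + Q b 1 t) 0 (1 / 2)).
        { apply RInt_ge_0. lra. apply exR; auto; lra. intros; assert (HQa := Q_nonneg b 0 x); assert (HQb := Q_nonneg b 1 x); lra. }
        lra.
      - apply II_rint_le; auto. intros; assert (HQa := Q_nonneg b 0 x); assert (HQb := Q_nonneg b 1 x); lra. lra. }
    apply Rle_trans with (- (exp (- a) / (1 + u)) * RInt (fun t => Q b 0 t + Q b 1 t) (1 / 2) B).
    { assert (0 <= exp (- a) / (1 + u)) by (apply Rdiv_le_0_compat; [left; apply exp_pos|lra]). nra. }
    rewrite <- RIntScal by (apply exR; auto; lra).
    apply RInt_le. lra. apply exScal. apply exR; auto; lra.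
    apply exR; auto; lra.
    intros x Hx. unfold Eint, kE.
    assert (HQ0 := Q_nonneg b 0 x). assert (HQ1 := Q_nonneg b 1 x).
    assert (He := exp_pos (- a)). assert (Hk := kE_le1 b a u x Ha Hu ltac:(lra)). unfold kE in Hk.
    assert (0 <= exp (- a) / (1 + u)) by (apply Rdiv_le_0_compat; lra).
    destruct (Rlt_le_dec x 1) as [Hx1|Hx1].
    + assert (Hh := hE_pos b x Hb ltac:(lra)). nra.
    + assert (Hp1 := pc_ge1 b x Hb Hx1).
      assert (Hh : hE b x <= 0) by (unfold hE; assert (Hex0 := exp_pos (- pc b x)); nra).
      assert (HHa := hE_abs b x). rewrite Rabs_left1 in HHa by auto.
      assert (exp (- a * pc b x) <= exp (- a)) by (apply exp_mono_le; nra).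
      assert (Hd : / (1 + u * x) <= / (1 + u)) by (apply Rinv_le_contravar; nra).
      assert (exp (- a * pc b x) / (1 + u * x) <= exp (- a) / (1 + u)).
      { unfold Rdiv. apply Rmult_le_compat; try lra. left; apply exp_pos. left; apply Rinv_0_lt_compat; nra. }
      nra. }
  unfold Rdiv. fold q H1. 
  replace ((exp (- a * q) * H1 - exp (- a) * H) * / (1 + u)) with
    (exp (- a * q) / (1 + u) * H1 + - (exp (- a) / (1 + u)) * H) by (field; lra).
  lra.
Qed.


Lemma II_nonneg f l : II f l -> (forall x, 0 <= x -> 0 <= f x) -> 0 <= l.
Proof.
  intros Hf Hp. apply II_lb with (1 := Hf). exists 0. intros B HB.
  destruct Hf as [Hf _]. apply RInt_ge_0. lra. apply Hf; lra. intros; apply Hp; lra.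
Qed.

Lemma upow_pos b L : 0 < Rpower L (- / b).
Proof. unfold Rpower; apply exp_pos. Qed.

Lemma upow_anti b L L' : 0 < b -> 0 < L -> L < L' -> Rpower L' (- / b) < Rpower L (- / b).
Proof.
  intros Hb HL HLL. rewrite !Rpower_Ropp. apply Rinv_lt_contravar.
  apply Rmult_lt_0_compat; unfold Rpower; apply exp_pos.
  apply Rlt_Rpower_l. apply Rinv_0_lt_compat; auto. lra.
Qed.

Lemma TP2L b c L L' : 0 < b -> 0 < c -> 0 < L -> L < L' -> 0 <= Gk b c 1 L' -> 0 < Gk b c 1 L.
Proof.
  intros Hb Hc HL HLL HD.
  rewrite Dlink in HD |- * by lra.
  assert (Hu' := upow_pos b L'). assert (Hu := upow_pos b L).
  assert (HE : 0 <= Ev b (c / L') (Rpower L' (- / b))).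
  { apply Rmult_le_reg_l with (Rpower L' (- / b)). auto. lra. }
  apply Rmult_lt_0_compat. auto.
  apply TP2E with (c / L') (Rpower L' (- / b)); auto.
  apply Rdiv_le_0_compat; lra.
  apply Rmult_lt_compat_l. lra. apply Rinv_lt_contravar; nra.
  lra. left. apply upow_anti; auto.
Qed.

Lemma exists_pos b c : 0 < b < 1 -> 0 < c -> exists L1, 0 < L1 /\ 0 < Gk b c 1 L1.
Proof.
  intros [Hb Hb1] Hc.
  set (q := pc b (1/2)). set (H1 := RInt (hE b) 0 (1 / 2)). set (H := Int (Q b 0) + Int (Q b 1)).
  assert (Hq : q < 1) by (apply pc_lt1; lra). assert (Hq0 : 0 <= q) by apply pc_ge0.
  assert (HH1 : 0 < H1) by (apply H1_pos; auto).
  assert (HH : 0 <= H) by (unfold H; assert (X0 := II_nonneg _ _ (Q_II b 0 Hb) (fun x _ => Q_nonneg b 0 x));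
     assert (X1 := II_nonneg _ _ (Q_II b 1 Hb) (fun x _ => Q_nonneg b 1 x)); lra).
  set (a0 := H / (H1 * (1 - q)) + 1).
  assert (Ha0 : 0 < a0) by (unfold a0; assert (0 <= H / (H1 * (1 - q))) by (apply Rdiv_le_0_compat; nra); lra).
  exists (c / a0). split. apply Rdiv_lt_0_compat; auto.
  assert (HL : 0 < c / a0) by (apply Rdiv_lt_0_compat; auto).
  rewrite Dlink by auto. apply Rmult_lt_0_compat. apply upow_pos.
  replace (c / (c / a0)) with a0 by (field; lra).
  eapply Rlt_le_trans; [| apply Elarge; auto; try lra; left; apply upow_pos].
  fold q H1 H. apply Rdiv_lt_0_compat. 2: assert (Hu := upow_pos b (c/a0)); lra.
  assert (Hz : H < a0 * (1 - q) * H1).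
  { unfold a0. replace ((H / (H1 * (1 - q)) + 1) * (1 - q) * H1) with (H + (1 - q) * H1) by (field; lra). nra. }
  assert (He := exp_ineq1_le (a0 * (1 - q))).
  assert (Hexp : exp (- a0 * q) = exp (- a0) * exp (a0 * (1 - q))) by (rewrite <- exp_plus; f_equal; ring).
  rewrite Hexp. assert (He0 := exp_pos (- a0)).
  assert (H < exp (a0 * (1 - q)) * H1) by nra.
  nra.
Qed.

Lemma exists_neg b c : 0 < b < 1 -> 0 < c -> exists L2, 0 < L2 /\ Gk b c 1 L2 < 0.
Proof.
  intros [Hb Hb1] Hc.
  set (E0 := Ev b 0 0). assert (HE0 : E0 < 0) by (apply E0_neg; auto).
  set (M1 := Int (Q b 1) + Int (Q b 2)). set (M2 := Int (m2 b)).
  assert (HM1 : 0 <= M1) by (unfold M1; assert (X0 := II_nonneg _ _ (Q_II b 1 Hb) (fun x _ => Q_nonneg b 1 x));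
     assert (X1 := II_nonneg _ _ (Q_II b 2 Hb) (fun x _ => Q_nonneg b 2 x)); lra).
  assert (HM2 : 0 <= M2).
  { apply II_nonneg with (m2 b). apply m2_II; auto. intros x Hx. unfold m2.
    assert (X0 := Q_nonneg b 0 x). assert (X1 := Q_nonneg b 1 x). nra. }
  set (K := c * M1 + M2). assert (HK : 0 <= K) by (unfold K; nra).
  set (L2 := K / (- E0) + 1).
  assert (HL2 : 1 <= L2) by (unfold L2; assert (0 <= K / - E0) by (apply Rdiv_le_0_compat; lra); lra).
  exists L2. split. lra.
  rewrite Dlink by lra. set (u := Rpower L2 (- / b)).
  assert (Hu := upow_pos b L2). fold u in Hu.
  assert (Hu1 : u <= / L2).
  { unfold u. rewrite <- (Rpower_1 L2) at 2 by lra. rewrite <- Rpower_Ropp. apply Rle_Rpower. auto.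
    apply Ropp_le_contravar. rewrite <- Rinv_1. apply Rinv_le_contravar; lra. }
  assert (Hs := Esmall b (c / L2) u ltac:(lra) ltac:(apply Rdiv_le_0_compat; lra) ltac:(lra)).
  fold M1 M2 E0 in Hs.
  assert (Hb2 : c / L2 * M1 + u * M2 <= K / L2).
  { unfold K. unfold Rdiv. rewrite Rmult_plus_distr_r.
    assert (u * M2 <= / L2 * M2) by (apply Rmult_le_compat_r; auto).
    nra. }
  assert (Hk : K / L2 < - E0).
  { apply Rmult_lt_reg_r with L2. lra. replace (K / L2 * L2) with K by (field; lra).
    unfold L2. replace (- E0 * (K / - E0 + 1)) with (K - E0) by (field; lra). lra. }
  apply Rabs_le_between in Hs || (apply Rabs_def2b in Hs) || idtac.
  assert (Hl : Ev b (c / L2) u < 0).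
  { assert (X := Rle_abs (Ev b (c / L2) u - E0)). lra. }
  assert (u * Ev b (c / L2) u < 0) by nra. auto.
Qed.


Theorem lemma2 (alpha : R) (i : nat) (Lj : R) :
  2 < alpha -> (i = 1%nat \/ i = 2%nat) -> 0 < Lj ->
  (forall (n : nat) (L : R), 0 < L -> ex_derive_n (Ui_section alpha i Lj) n L) /\
  (forall L : R, 0 < L -> continuous (Ui_section alpha i Lj) L) /\
  (exists! Ls : R, 0 < Ls /\
     forall L : R, 0 < L -> Ui_section alpha i Lj L <= Ui_section alpha i Lj Ls).
Proof.
  intros Ha Hi Hc.
  set (b := 2 / alpha). set (c := Lj).
  assert (Hb : 0 < b < 1).
  { unfold b. split. apply Rdiv_lt_0_compat; lra.
    apply Rmult_lt_reg_r with alpha. lra. unfold Rdiv. rewrite Rmult_assoc, Rinv_l by lra. lra. }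
  set (f := Ui_section alpha i Lj).
  assert (Hf : forall L, 0 < L -> f L = Gk b c 0 L).
  { intros L HL. unfold f, Ui_section, U, Gk. simpl INR. rewrite Rmult_0_l, Rplus_0_r.
    destruct Hi as [-> | ->]; simpl.
    - rewrite Iint_Fv by lra. reflexivity.
    - rewrite Rplus_comm. rewrite Iint_Fv by lra. reflexivity. }
  assert (HG : forall k x, 0 < x -> is_derive (Gk b c k) x (Gk b c (S k) x)).
  { intros k x Hx. apply Gk_derive; auto; lra. }
  assert (Hsm := smooth_gen f (Gk b c) HG Hf).
  assert (Hd : forall L, 0 < L -> is_derive f L (Gk b c 1 L)).
  { intros L HL. apply is_derive_ext_loc with (Gk b c 0).
    exists (mkposreal L HL). intros y Hy. change (Rabs (y - L) < L) in Hy. apply Rabs_lt_between in Hy.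
    symmetry; apply Hf; lra. apply HG; auto. }
  assert (Hdr : forall L, 0 < L -> derivable_pt_lim f L (Gk b c 1 L)).
  { intros L HL. apply is_derive_Reals. auto. }
  set (D := Gk b c 1).
  assert (TP : forall L L', 0 < L -> L < L' -> 0 <= D L' -> 0 < D L).
  { intros L L' HL HLL HD. apply TP2L with L'; auto; lra. }
  split; [|split].
  - intros n L HL. apply Hsm; auto.
  - intros L HL. apply deriv_cont with (Gk b c 1 L). auto.
  - destruct (exists_pos b c Hb Hc) as [L1 [HL1 HD1]].
    destruct (exists_neg b c Hb Hc) as [L2 [HL2 HD2]].
    fold D in HD1, HD2.
    assert (H12 : L1 < L2).
    { destruct (Rlt_le_dec L1 L2) as [H|H]; auto. destruct H as [H|H].
      - assert (X := TP L2 L1 HL2 H ltac:(lra)). lra.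
      - subst; lra. }
    destruct (continuity_ab_maj f L1 L2 ltac:(lra)) as [Mx [HMx HMx2]].
    { intros x Hx. apply derivable_continuous_pt. exists (D x). apply Hdr. lra. }
    assert (HMp : 0 < Mx) by lra.
    assert (Hglob : forall L, 0 < L -> f L <= f Mx).
    { intros L HL. destruct (Rlt_le_dec L L1) as [HL1'|HL1'].
      - destruct (MVT_cor2 f D L L1 HL1') as [xi [Hxi1 Hxi2]].
        { intros x Hx. apply Hdr. lra. }
        assert (Hp := TP xi L1 ltac:(lra) ltac:(lra) ltac:(lra)).
        assert (f L1 <= f Mx) by (apply HMx; lra).
        assert (0 < D xi * (L1 - L)) by (apply Rmult_lt_0_compat; lra). lra.
      - destruct (Rle_lt_dec L L2) as [HL2'|HL2'].
        + apply HMx. lra.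
        + destruct (MVT_cor2 f D L2 L HL2') as [xi [Hxi1 Hxi2]].
          { intros x Hx. apply Hdr. lra. }
          assert (Hn : D xi < 0).
          { destruct (Rlt_le_dec (D xi) 0) as [X|X]; auto.
            assert (Y := TP L2 xi HL2 ltac:(lra) X). lra. }
          assert (f L2 <= f Mx) by (apply HMx; lra).
          assert (D xi * (L - L2) < 0) by (apply Rmult_neg_pos || nra; lra). lra. }
    assert (Hzero : forall M, 0 < M -> (forall L, 0 < L -> f L <= f M) -> D M = 0).
    { intros M HM Hmax.
      assert (pr : derivable_pt f M) by (exists (D M); apply Hdr; auto).
      assert (Hz := deriv_maximum f 0 (M + 1) M pr HM ltac:(lra) ltac:(intros x Hx _; apply Hmax; auto)).
      rewrite <- Hz. destruct pr as [l Hl]. simpl. eapply uniqueness_limite; [apply Hdr; auto | exact Hl]. }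
    exists Mx. split. split; auto.
    intros Ls [HLs Hmax].
    assert (Z1 := Hzero Mx HMp Hglob). assert (Z2 := Hzero Ls HLs Hmax).
    destruct (Rtotal_order Mx Ls) as [X|[X|X]]; auto.
    + assert (Y := TP Mx Ls HMp X ltac:(lra)). lra.
    + assert (Y := TP Ls Mx HLs X ltac:(lra)). lra.
Qed.
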